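(* Let $(x,y)$ be a Nash equilibrium (possibly mixed) of the input $2\times2$ game, where player 1 plays row 0 with probability $x$ and player 2 plays column 0 with probability $y$. Then for every initial state $|\psi_{\mathrm{in}}\rangle$, the profile $\tau_1=(x,1-x,0,0)$, $\tau_2=(y,1-y,0,0)$ (i.e. each player uses only the actions $C\times\mathds{1}$, $C\times\sigma_x$ with the equilibrium probabilities) is a Nash equilibrium of the eMW game, and it yields the same payoffs as $(x,y)$ in the input game.
   Context: Input game: $2\times2$ bimatrix game with payoff pairs $(a_{ij},b_{ij})$, $i,j\in\{0,1\}$ (player 1 chooses $i$, player 2 chooses $j$). $\sigma_x=\begin{pmatrix}0&1\\1&0\end{pmatrix}$. eMW game: each player has pure strategies $C\times\mathds{1},C\times\sigma_x,Q\times\mathds{1},Q\times\sigma_x$; mixed strategies $\tau_1=(p_1,\dots,p_4)$, $\tau_2=(q_1,\dots,q_4)$ in this order. With $\rho_{\mathrm{in}}=|\psi_{\mathrm{in}}\rangle\langle\psi_{\mathrm{in}}|$, $\rho_{00}=|00\rangle\langle00|$, the final state is $\rho_{\mathrm{ext}}=[(p_1q_1+p_1q_3+p_3q_1)\rho_{00}+p_3q_3\rho_{\mathrm{in}}]+(\mathds{1}\otimes\sigma_x)[(p_1q_2+p_1q_4+p_3q_2)\rho_{00}+p_3q_4\rho_{\mathrm{in}}](\mathds{1}\otimes\sigma_x)+(\sigma_x\otimes\mathds{1})[(p_2q_1+p_2q_3+p_4q_1)\rho_{00}+p_4q_3\rho_{\mathrm{in}}](\sigma_x\otimes\mathds{1})+(\sigma_x\otimes\sigma_x)[(p_2q_2+p_2q_4+p_4q_2)\rho_{00}+p_4q_4\rho_{\mathrm{in}}](\sigma_x\otimes\sigma_x)$,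 and the payoff pair is $\mathrm{tr}(X\rho_{\mathrm{ext}})$ with $X=\sum_{ij}(a_{ij},b_{ij})|ij\rangle\langle ij|$ (first component to player 1, second to player 2). Nash equilibrium is in the usual sense for mixed strategies. *)

(* Defs.v *)
(* Complex scalars: an arbitrary numClosedFieldType C
   (e.g. algC); real quantities are elements x with x \is Num.real. *)
From HB Require Import structures.
From mathcomp Require Import all_boot all_order all_algebra.
Set Implicit Arguments. Unset Strict Implicit. Unset Printing Implicit Defensive.
Import Order.TTheory GRing.Theory Num.Theory.
Local Open Scope ring_scope.

Section QGame.
Variable C : numClosedFieldType.

Definition pay2x2 (u : 'I_2 -> 'I_2 -> C) (x y : C) : C :=
  x * y * u 0 0 + x * (1 - y) * u 0 1 + (1 - x) * y * u 1 0
  + (1 - x) * (1 - y) * u 1 1.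

Definition prob (x : C) : Prop := 0 <= x /\ x <= 1.

Definition NE2x2 (a b : 'I_2 -> 'I_2 -> C) (x y : C) : Prop :=
  prob x /\ prob y /\
  (forall x', prob x' -> pay2x2 a x' y <= pay2x2 a x y) /\
  (forall y', prob y' -> pay2x2 b x y' <= pay2x2 b x y).

(* computational basis |ij> of C^2 (x) C^2, index 2*i + j *)
Definition idx (i j : 'I_2) : 'I_4 := inord (2 * i + j).
Definition ket (i j : 'I_2) : 'cV[C]_4 := delta_mx (idx i j) 0.

Definition kron (A B : 'M[C]_2) : 'M[C]_4 :=
  \matrix_(k < 4, l < 4)
     (A (inord (k %/ 2)) (inord (l %/ 2)) * B (inord (k %% 2)) (inord (l %% 2))).

Definition sigx : 'M[C]_2 := \matrix_(i < 2, j < 2) (i != j)%:R.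
Definition id2 : 'M[C]_2 := 1%:M.

Definition adjv (v : 'cV[C]_4) : 'rV[C]_4 := (map_mx Num.conj v)^T.
Definition proj (v : 'cV[C]_4) : 'M[C]_4 := v *m adjv v.

Definition rho00 : 'M[C]_4 := proj (ket 0 0).

Definition obsX (u : 'I_2 -> 'I_2 -> C) : 'M[C]_4 :=
  \sum_(i < 2) \sum_(j < 2) u i j *: proj (ket i j).

(* mixed strategies over (C x 1, C x sx, Q x 1, Q x sx); pr p k = p_{k+1} *)
Definition pr (p : 'I_4 -> C) (k : nat) : C := p (inord k).

Definition mixed4 (p : 'I_4 -> C) : Prop :=
  (forall k, 0 <= p k) /\ \sum_(k < 4) p k = 1.

Definition rho_ext (rin : 'M[C]_4) (p q : 'I_4 -> C) : 'M[C]_4 :=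
  let p1 := pr p 0 in let p2 := pr p 1 in let p3 := pr p 2 in let p4 := pr p 3 in
  let q1 := pr q 0 in let q2 := pr q 1 in let q3 := pr q 2 in let q4 := pr q 3 in
  ((p1*q1 + p1*q3 + p3*q1) *: rho00 + (p3*q3) *: rin)
  + kron id2 sigx *m ((p1*q2 + p1*q4 + p3*q2) *: rho00 + (p3*q4) *: rin) *m kron id2 sigx
  + kron sigx id2 *m ((p2*q1 + p2*q3 + p4*q1) *: rho00 + (p4*q3) *: rin) *m kron sigx id2
  + kron sigx sigx *m ((p2*q2 + p2*q4 + p4*q2) *: rho00 + (p4*q4) *: rin) *m kron sigx sigx.

Definition payEMW (u : 'I_2 -> 'I_2 -> C) (rin : 'M[C]_4) (p q : 'I_4 -> C) : C :=
  \tr (obsX u *m rho_ext rin p q).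

Definition NE_EMW (a b : 'I_2 -> 'I_2 -> C) (rin : 'M[C]_4) (p q : 'I_4 -> C) : Prop :=
  mixed4 p /\ mixed4 q /\
  (forall p', mixed4 p' -> payEMW a rin p' q <= payEMW a rin p q) /\
  (forall q', mixed4 q' -> payEMW b rin p q' <= payEMW b rin p q).

Definition classical_strat (x : C) : 'I_4 -> C :=
  fun k => if val k == 0%N then x else if val k == 1%N then 1 - x else 0.

End QGame.

(* Main.v *)
Require Import Defs.
From HB Require Import structures.
From mathcomp Require Import all_boot all_order all_algebra ring.
Import Order.TTheory GRing.Theory Num.Theory.
Local Open Scope ring_scope.

Section H.
Variable C : numClosedFieldType.

Lemma projE (i j : 'I_2) : proj (ket C i j) = delta_mx (idx i j) (idx i j).
Proof.
rewrite /proj /adjv /ket.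
have -> : map_mx Num.conj (delta_mx (idx i j) 0 : 'cV[C]_4) = delta_mx (idx i j) 0.
  by apply/matrixP => r s; rewrite !mxE conjC_nat.
by rewrite trmx_delta mul_delta_mx.
Qed.

Lemma tr_delta (k : 'I_4) (M : 'M[C]_4) : \tr (delta_mx k k *m M) = M k k.
Proof.
rewrite /mxtrace (bigD1 k) //= big1 => [|t tk]; rewrite mxE.
  rewrite (bigD1 k) //= big1 => [|t tk]; rewrite !mxE ?eqxx.
    by rewrite mul1r !addr0.
  by move: tk; case: eqP => //= _ _; rewrite mul0r.
by rewrite big1 // => v _; rewrite !mxE; move: tk; case: eqP => //= _ _; rewrite mul0r.
Qed.

Lemma trX (u : 'I_2 -> 'I_2 -> C) (M : 'M[C]_4) :
  \tr (obsX u *m M) = \sum_(i < 2) \sum_(j < 2) u i j * M (idx i j) (idx i j).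
Proof.
rewrite /obsX mulmx_suml raddf_sum; apply: eq_bigr => i _.
rewrite mulmx_suml raddf_sum; apply: eq_bigr => j _.
by rewrite -scalemxAl /= mxtraceZ projE tr_delta.
Qed.

Lemma mid_delta (A B : 'M[C]_4) k r s : (A *m delta_mx k k *m B) r s = A r k * B k s.
Proof.
rewrite mxE (bigD1 k) //= big1 => [|t tk]; rewrite mxE.
  rewrite (bigD1 k) //= big1 => [|t tk]; rewrite !mxE ?eqxx.
    by rewrite mulr1 !addr0.
  by move: tk; case: eqP => //= _ _; rewrite mulr0.
rewrite big1 ?mul0r // => v _; rewrite !mxE; move: tk; case: eqP => //= _ _; by rewrite andbF mulr0.
Qed.

Lemma idxE (i j : 'I_2) : nat_of_ord (idx i j) = (2 * i + j)%N.
Proof. by rewrite /idx inordK //; case: i j => [[|[|i]] Hi] [[|[|j]] Hj]. Qed.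

Lemma mid_deltaM (A B : 'M[C]_4) k : A *m delta_mx k k *m B = \matrix_(r, s) (A r k * B k s).
Proof. by apply/matrixP => r s; rewrite mid_delta mxE. Qed.

Lemma o0 : (widen_ord (leqnSn 1) ord_max : 'I_2) = 0. Proof. exact: val_inj. Qed.
Lemma o1 : (ord_max : 'I_2) = 1. Proof. exact: val_inj. Qed.

Lemma inord_div (i j : 'I_2) : (inord ((idx i j) %/ 2) : 'I_2) = i.
Proof.
apply/val_inj => /=; rewrite idxE inordK; by case: i j => [[|[|i]] Hi] [[|[|j]] Hj].
Qed.

Lemma inord_mod (i j : 'I_2) : (inord ((idx i j) %% 2) : 'I_2) = j.
Proof.
apply/val_inj => /=; rewrite idxE inordK; by case: i j => [[|[|i]] Hi] [[|[|j]] Hj].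
Qed.

Lemma kronE (A B : 'M[C]_2) i j k l : kron A B (idx i j) (idx k l) = A i k * B j l.
Proof. by rewrite /kron mxE !inord_div !inord_mod. Qed.


Lemma idx_eq (i j k l : 'I_2) : (idx i j == idx k l) = (i == k) && (j == l).
Proof.
rewrite -(inj_eq val_inj) /= !idxE.
by case: i j k l => [[|[|i]] Hi] [[|[|j]] Hj] [[|[|k]] Hk] [[|[|l]] Hl].
Qed.

Lemma payE (u : 'I_2 -> 'I_2 -> C) rin p q :
  pr p 2 * pr q 2 = 0 -> pr p 2 * pr q 3 = 0 -> pr p 3 * pr q 2 = 0 -> pr p 3 * pr q 3 = 0 ->
  payEMW u rin p q =
    (pr p 0 * pr q 0 + pr p 0 * pr q 2 + pr p 2 * pr q 0) * u 0 0
  + (pr p 0 * pr q 1 + pr p 0 * pr q 3 + pr p 2 * pr q 1) * u 0 1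
  + (pr p 1 * pr q 0 + pr p 1 * pr q 2 + pr p 3 * pr q 0) * u 1 0
  + (pr p 1 * pr q 1 + pr p 1 * pr q 3 + pr p 3 * pr q 1) * u 1 1.
Proof.
move=> h1 h2 h3 h4.
rewrite /payEMW /rho_ext /= h1 h2 h3 h4 !scale0r !addr0 -!scalemxAr -!scalemxAl trX.
rewrite !big_ord_recr !big_ord0 /= /rho00 !projE !mid_deltaM.
set K1 := kron _ _; set K2 := kron _ _; set K3 := kron _ _.
rewrite !mxE !inord_div !inord_mod !idx_eq !o0 !o1 /=.
ring.


Qed.

Lemma prc (x : C) : [/\ pr (classical_strat x) 0 = x, pr (classical_strat x) 1 = 1 - x,
  pr (classical_strat x) 2 = 0 & pr (classical_strat x) 3 = 0].
Proof. by rewrite /pr /classical_strat /= !inordK. Qed.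

Lemma mixed_sum (p : 'I_4 -> C) : mixed4 p ->
  [/\ 0 <= pr p 0, 0 <= pr p 1, 0 <= pr p 2, 0 <= pr p 3 &
      pr p 0 + pr p 1 + pr p 2 + pr p 3 = 1].
Proof.
case=> h0 h1; split; try exact: h0.
rewrite -h1 (eq_bigr (fun k : 'I_4 => pr p k)); last by move=> k _; rewrite /pr inord_val.
by rewrite !big_ord_recr big_ord0 /= add0r.
Qed.

Lemma mixed_cl (x : C) : prob x -> mixed4 (classical_strat x).
Proof.
case=> h0 h1; split.
  move=> k; rewrite /classical_strat; case: ifP => _ //; case: ifP => _ //.
  by rewrite subr_ge0.
rewrite !big_ord_recr big_ord0 /= /classical_strat /=.
ring.
Qed.
End H.

Theorem mainTheorem4 (C : numClosedFieldType)
    (a b : 'I_2 -> 'I_2 -> C)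
    (a_real : forall i j, a i j \is Num.real)
    (b_real : forall i j, b i j \is Num.real)
    (x y : C) (hNE : NE2x2 a b x y)
    (psi : 'cV[C]_4) (psi_unit : adjv psi *m psi = 1%:M) :
  NE_EMW a b (proj psi) (classical_strat x) (classical_strat y) /\
  payEMW a (proj psi) (classical_strat x) (classical_strat y) = pay2x2 a x y /\
  payEMW b (proj psi) (classical_strat x) (classical_strat y) = pay2x2 b x y.
Proof.
case: hNE => px [py [ha hb]].
have [x0 x1 x2 x3] := @prc C x.
have [y0 y1 y2 y3] := @prc C y.
have eqa : forall p, mixed4 p -> payEMW a (proj psi) p (classical_strat y)
    = pay2x2 a (pr p 0 + pr p 2) y.
  move=> p /mixed_sum [_ _ _ _ hs].
  rewrite payE ?y2 ?y3 ?mulr0 // y0 y1 /pay2x2.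
  have -> : 1 - (pr p 0 + pr p 2) = pr p 1 + pr p 3 by rewrite -hs; ring.
  ring.
have eqb : forall q, mixed4 q -> payEMW b (proj psi) (classical_strat x) q
    = pay2x2 b x (pr q 0 + pr q 2).
  move=> q /mixed_sum [_ _ _ _ hs].
  rewrite payE ?x2 ?x3 ?mul0r // x0 x1 /pay2x2.
  have -> : 1 - (pr q 0 + pr q 2) = pr q 1 + pr q 3 by rewrite -hs; ring.
  ring.
have mx := @mixed_cl C x px; have my := @mixed_cl C y py.
have probS : forall p : 'I_4 -> C, mixed4 p -> prob (pr p 0 + pr p 2).
  move=> p hp; have [h0 h1 h2 h3 hs] := @mixed_sum C p hp.
  split; first exact: addr_ge0.
  rewrite -hs.
  have -> : pr p 0 + pr p 1 + pr p 2 + pr p 3 = (pr p 0 + pr p 2) + (pr p 1 + pr p 3) by ring.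
  by rewrite lerDl addr_ge0.
have ex : pr (classical_strat x) 0 + pr (classical_strat x) 2 = x by rewrite x0 x2 addr0.
have ey : pr (classical_strat y) 0 + pr (classical_strat y) 2 = y by rewrite y0 y2 addr0.
split; last split.
- split; first exact: mx. split; first exact: my. split.
  + move=> p' hp'; rewrite !eqa // ex; exact: ha (probS _ hp').
  + move=> q' hq'; rewrite !eqb // ey; exact: hb (probS _ hq').
- by rewrite eqa // ex.
- by rewrite eqb // ey.
Qed.
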